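(* Let $p>p_0\ge1$, $f_n\in C[0,1]^p$, and suppose there exist $\widetilde f_n\in C[0,1]^{p_0}$ and $\eta_n>0$ with $\sup_{\mathbf{x}\in[0,1]^p}|f_n(\mathbf{x})-\widetilde f_n(x_1,\ldots,x_{p_0})|<\eta_n$, and a positive constant $\tau$ with $|\int_{[0,1]^p}x_jf_n(\mathbf{x})d\mathbf{x}-\frac12\int_{[0,1]^p}f_n(\mathbf{x})d\mathbf{x}|>\tau$ for each $j=1,\ldots,p_0$. Then for every $\mathcal{A}\subset Z_p$, $$\beta_{Z_p}(\mathcal{A})_j=12\left(\int_{[0,1]^p}x_jf_n(\mathbf{x})d\mathbf{x}-\frac12\int_{[0,1]^p}f_n(\mathbf{x})d\mathbf{x}\right),\quad j\in\mathcal{A},$$ $$\beta_0(\mathcal{A})=\int_{[0,1]^p}f_n(\mathbf{x})d\mathbf{x}-\sum_{j\in\mathcal{A}}\beta_{Z_p}(\mathcal{A})_j/2.$$ Furthermore, $|\beta_{Z_p}(\mathcal{A})_j|>12\tau$ for $j\in\mathcal{A}\cap\mathcal{A}_0$ and $|\beta_{Z_p}(\mathcal{A})_j|<12\eta_n$ for $j\in\mathcal{A}\setminus\mathcal{A}_0$.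
   Context: $Z_d=\{1,\ldots,d\}$, $\mathcal{A}_0=Z_{p_0}$. For $\mathcal{A}\subset Z_p$ and $\mathbf{x}\in[0,1]^p$, $\mathbf{x}_{\mathcal{A}}$ is the subvector of coordinates in $\mathcal{A}$. $(\beta_0(\mathcal{A}),\boldsymbol\beta(\mathcal{A})')'\in\mathbb{R}\times\mathbb{R}^{|\mathcal{A}|}$ minimizes $\int_{[0,1]^p}[f_n(\mathbf{x})-\phi_0-\boldsymbol\phi'\mathbf{x}_{\mathcal{A}}]^2d\mathbf{x}$ over $(\phi_0,\boldsymbol\phi)$, and $\boldsymbol\beta_{Z_p}(\mathcal{A})=(\beta_{Z_p}(\mathcal{A})_1,\ldots,\beta_{Z_p}(\mathcal{A})_p)'$ is the $p$-vector whose coordinates indexed by $\mathcal{A}$ equal $\boldsymbol\beta(\mathcal{A})$ and whose other coordinates are $0$. *)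

(* Defs.v *)
From HB Require Import structures.
From mathcomp Require Import all_boot all_order all_algebra.
From mathcomp Require Import all_classical all_reals all_analysis.
Set Implicit Arguments. Unset Strict Implicit. Unset Printing Implicit Defensive.
Import Order.TTheory GRing.Theory Num.Theory.
Import numFieldNormedType.Exports.
Local Open Scope classical_set_scope.
Local Open Scope ring_scope.

Section defs.
Variable R : realType.

(* Points of [0,1]^p are row vectors x : 'rV[R]_p; coordinate j (0-based) is x ord0 j. *)
Definition cube (p : nat) : set 'rV[R]_p :=
  [set x | forall i : 'I_p, 0 <= x ord0 i <= 1].

Definition vcons (n : nat) (t : R) (x : 'rV[R]_n) : 'rV[R]_n.+1 :=
  \row_(i < n.+1) (if unlift ord0 i is Some j then x ord0 j else t).

(* Integral over [0,1]^p, written as the iterated Lebesgue integral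
   \int_0^1 ... \int_0^1 F(x_1,...,x_p) dx_p ... dx_1. *)
Fixpoint cube_int (p : nat) : ('rV[R]_p -> R) -> R :=
  match p with
  | 0 => fun F => F 0
  | n.+1 => fun F =>
      Rintegral (@lebesgue_measure R) `[0, 1]%classic
        (fun t => cube_int (fun x : 'rV[R]_n => F (vcons t x)))
  end.

Definition proj_first (p0 p : nat) (h : (p0 <= p)%N) (x : 'rV[R]_p) : 'rV[R]_p0 :=
  \row_(j < p0) x ord0 (widen_ord h j).

(* a p-vector whose coordinates outside A vanish (an element of R^{|A|}
   embedded in R^p, i.e. beta_{Z_p}(A)) *)
Definition supported_on (p : nat) (A : {set 'I_p}) (c : 'rV[R]_p) : Prop :=
  forall j : 'I_p, j \notin A -> c ord0 j = 0.

Definition LS_obj (p : nat) (f : 'rV[R]_p -> R) (A : {set 'I_p})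
    (c0 : R) (c : 'rV[R]_p) : R :=
  cube_int (fun x => (f x - c0 - \sum_(j in A) c ord0 j * x ord0 j) ^+ 2).

(* (b0, b) = (beta_0(A), beta_{Z_p}(A)) : a minimizer of LS_obj *)
Definition is_LS_min (p : nat) (f : 'rV[R]_p -> R) (A : {set 'I_p})
    (b0 : R) (b : 'rV[R]_p) : Prop :=
  supported_on A b /\
  forall (c0 : R) (c : 'rV[R]_p), supported_on A c -> LS_obj f A b0 b <= LS_obj f A c0 c.

End defs.
Arguments cube {R} p.
Arguments cube_int {R p} F.

(* Main.v *)
Require Import Defs.
From HB Require Import structures.
From mathcomp Require Import all_boot all_order all_algebra.
From mathcomp Require Import all_classical all_reals all_analysis.
Import Order.TTheory GRing.Theory Num.Theory.
Import numFieldNormedType.Exports.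
Local Open Scope classical_set_scope.
Local Open Scope ring_scope.
From mathcomp Require Import ring lra zify.
Set Implicit Arguments. Unset Strict Implicit. Unset Printing Implicit Defensive.
Section S.
Variable R : realType.

Lemma coord_ball n (z y : 'rV[R]_n) d : 0 < d -> (forall i, `|z ord0 i - y ord0 i| < d) -> ball z d y.
Proof. move=> d0 h; split => // i j. rewrite [i]ord1. exact: h. Qed.
Lemma ball_coord n (z y : 'rV[R]_n) d : ball z d y -> forall i, `|z ord0 i - y ord0 i| < d.
Proof. move=> [_ h] i. have := h ord0 i. rewrite /ball /=. done. Qed.

Lemma cont_eps n (F : 'rV[R]_n -> R) : {within cube n, continuous F} ->
  forall z, cube n z -> forall e, 0 < e -> exists2 d, 0 < d &
   forall y, cube n y -> (forall i, `|z ord0 i - y ord0 i| < d) -> `|F z - F y| < e.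
Proof.
move=> /subspace_continuousP hc z zc e e0.
have := hc z zc. move=> /cvgrPdist_lt /(_ e e0).
rewrite /within /= => /nbhs_ballP [d d0 hd].
exists d => // y yc hy. apply: (hd y) => //. exact: coord_ball.
Qed.

Definition UCn {n} (F : 'rV[R]_n -> R) := forall e, 0 < e -> exists2 d, 0 < d &
  forall x y, cube n x -> cube n y -> (forall i, `|x ord0 i - y ord0 i| < d) -> `|F x - F y| < e.

Lemma cube_compact n : compact (cube n : set 'rV[R]_n).
Proof.
have h2 : forall i : 'I_n, compact `[(0:R), 1]%classic by move=> i; exact: segment_compact.
exact: (@rV_compact R n (fun _ => `[(0:R),1]%classic) h2).
Qed.

Lemma HC n (F : 'rV[R]_n -> R) : {within cube n, continuous F} -> UCn F.
Proof.
move=> hc; have [//|nUC] := pselect (UCn F); exfalso.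
have [e [e0 H]] : exists e : R, 0 < e /\ forall d : R, 0 < d -> exists xy : 'rV[R]_n * 'rV[R]_n,
   [/\ cube n xy.1, cube n xy.2, (forall i, `|xy.1 ord0 i - xy.2 ord0 i| < d) & e <= `|F xy.1 - F xy.2|].
  apply: contrapT => nH; apply: nUC => e e0; apply: contrapT => nd.
  apply: nH; exists e; split => // d d0; apply: contrapT => nxy.
  apply: nd; exists d => // x y cx cy cxy; rewrite ltNge; apply/negP => hle.
  by apply: nxy; exists (x, y).
have /choice [X hX] : forall k : nat, exists xy : 'rV[R]_n * 'rV[R]_n,
   [/\ cube n xy.1, cube n xy.2, (forall i, `|xy.1 ord0 i - xy.2 ord0 i| < k.+1%:R^-1) & e <= `|F xy.1 - F xy.2|].
  by move=> k; apply: H.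
have hF : \forall k \near \oo, cube n (X k).1 by apply: nearW => k; case: (hX k).
have [z [zc zcl]] := @cube_compact n ((fun k => (X k).1) @ \oo) _ hF.
have e20 : 0 < e / 2 by rewrite divr_gt0.
have [d d0 hd] := cont_eps hc zc e20.
have d20 : 0 < d / 2 by rewrite divr_gt0.
have [v [[k hk ->] hb]] := zcl [set v | exists2 k : nat, 2 / d < k%:R & v = (X k).1]
   (ball z (d / 2)) (filterS (fun k hk => ex_intro2 _ _ k hk erefl) (nbhs_infty_gtr (2 / d)))
   (nbhsx_ballx z _ d20).
case: (hX k) => c1 c2 c12 hle.
have hk1 : k.+1%:R^-1 < d / 2.
  have kp : 0 < k.+1%:R :> R by [].
  rewrite -[d / 2]invrK ltf_pV2 ?posrE ?invr_gt0 //.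
  rewrite invf_div; apply: (lt_trans hk); rewrite ltr_nat; exact: ltnSn.
have hz1 := ball_coord hb.
have h1 : `|F z - F (X k).1| < e / 2.
  by apply: hd => // i; have := hz1 i; lra.
have h2 : `|F z - F (X k).2| < e / 2.
  apply: hd => // i.
  apply: (le_lt_trans (ler_distD ((X k).1 ord0 i) (z ord0 i) _)).
  by rewrite [X in _ < X](splitr d); apply: ltrD; [exact: hz1 | exact: lt_trans (c12 i) hk1].
have := ler_distD (F z) (F (X k).1) (F (X k).2).
rewrite distrC in h1. move: hle h1 h2. lra.
Qed.

Definition Bd {n} (F : 'rV[R]_n -> R) := exists M, forall x, cube n x -> `|F x| <= M.
Definition Cl {n} (F : 'rV[R]_n -> R) := UCn F /\ Bd F.
Definition UC1 (g : R -> R) := forall e, 0 < e -> exists2 d, 0 < d &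
  forall t s, 0 <= t <= 1 -> 0 <= s <= 1 -> `|t - s| < d -> `|g t - g s| < e.

Lemma UC1_cont g : UC1 g -> {within `[(0:R), 1]%classic, continuous g}.
Proof.
move=> hg; apply/subspace_continuousP => x hx.
apply/cvgrPdist_lt => e e0.
have [d d0 hd] := hg e e0.
rewrite /within; apply/nbhs_ballP; exists d => // y hy yin.
move: hx yin; rewrite /= !in_itv /= => hx yin.
by apply: hd => //; move: hy; rewrite /ball /=.
Qed.

Lemma UC1_int g : UC1 g -> lebesgue_measure.-integrable `[(0:R), 1]%classic (EFin \o g).
Proof.
move=> hg; apply: continuous_compact_integrable; first exact: segment_compact.
exact: UC1_cont.
Qed.

Lemma vcons0 n t (x : 'rV[R]_n) : vcons t x ord0 ord0 = t.
Proof. by rewrite /vcons mxE unlift_none. Qed.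

Lemma vconsS n t (x : 'rV[R]_n) j : vcons t x ord0 (lift ord0 j) = x ord0 j.
Proof. by rewrite /vcons mxE liftK. Qed.

Lemma cube_vcons n t (x : 'rV[R]_n) : 0 <= t <= 1 -> cube n x -> cube n.+1 (vcons t x).
Proof.
move=> ht hx i; case: (unliftP ord0 i) => [j ->|->]; first by rewrite vconsS; exact: hx.
by rewrite vcons0.
Qed.

Lemma Cl_sec n t (F : 'rV[R]_n.+1 -> R) : 0 <= t <= 1 -> Cl F -> Cl (fun x => F (vcons t x)).
Proof.
move=> ht [hU [M hM]]; split; last by exists M => x hx; apply: hM; exact: cube_vcons.
move=> e e0; have [d d0 hd] := hU e e0; exists d => // x y hx hy hxy.
apply: hd; try exact: cube_vcons.
move=> i; case: (unliftP ord0 i) => [j ->|->]; first by rewrite !vconsS.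
by rewrite !vcons0 subrr normr0.
Qed.

Lemma Cl_cst n c : Cl (fun _ : 'rV[R]_n => c).
Proof.
split; last by exists `|c|.
by move=> e e0; exists 1 => // *; rewrite subrr normr0.
Qed.

Lemma Cl_add n (F G : 'rV[R]_n -> R) : Cl F -> Cl G -> Cl (fun x => F x + G x).
Proof.
move=> [hF [M hM]] [hG [N hN]]; split; last first.
  exists (M + N) => x hx; apply: (le_trans (ler_normD _ _)); apply: lerD; [exact: hM|exact: hN].
move=> e e0; have e20 : 0 < e / 2 by rewrite divr_gt0.
have [d d0 hd] := hF _ e20; have [d' d0' hd'] := hG _ e20.
exists (Num.min d d'); first by rewrite lt_min d0 d0'.
move=> x y hx hy hxy.
have h1 : `|F x - F y| < e / 2 by apply: hd => // i; have := hxy i; rewrite lt_min => /andP[].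
have h2 : `|G x - G y| < e / 2 by apply: hd' => // i; have := hxy i; rewrite lt_min => /andP[].
have -> : F x + G x - (F y + G y) = (F x - F y) + (G x - G y) by ring.
apply: (le_lt_trans (ler_normD _ _)); rewrite [X in _ < X](splitr e); exact: ltrD.
Qed.

Lemma Cl_mul n (F G : 'rV[R]_n -> R) : Cl F -> Cl G -> Cl (fun x => F x * G x).
Proof.
move=> [hF [M hM]] [hG [N hN]].
have hM' : forall x, cube n x -> `|F x| <= `|M| by move=> x hx; exact: le_trans (hM x hx) (ler_norm _).
have hN' : forall x, cube n x -> `|G x| <= `|N| by move=> x hx; exact: le_trans (hN x hx) (ler_norm _).
split; last first.
  exists (`|M| * `|N|) => x hx; rewrite normrM; apply: ler_pM => //; [exact: hM'|exact: hN'].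
move=> e e0.
set K := `|M| + `|N| + 1.
have K0 : 0 < K by rewrite /K; have := normr_ge0 M; have := normr_ge0 N; lra.
set e1 := e / (2 * K).
have e10 : 0 < e1 by rewrite /e1 divr_gt0 // mulr_gt0.
have e1K : e1 * K = e / 2 by rewrite /e1; field; rewrite gt_eqF.
have [d d0 hd] := hF _ e10; have [d' d0' hd'] := hG _ e10.
exists (Num.min d d'); first by rewrite lt_min d0 d0'.
move=> x y hx hy hxy.
have h1 : `|F x - F y| < e1 by apply: hd => // i; have := hxy i; rewrite lt_min => /andP[].
have h2 : `|G x - G y| < e1 by apply: hd' => // i; have := hxy i; rewrite lt_min => /andP[].
have -> : F x * G x - F y * G y = (F x - F y) * G x + F y * (G x - G y) by ring.
apply: (le_lt_trans (ler_normD _ _)); rewrite !normrM.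
have := hN' x hx; have := hM' y hy.
have := normr_ge0 (F x - F y); have := normr_ge0 (G x - G y).
have := normr_ge0 (G x); have := normr_ge0 (F y).
have := normr_ge0 M; have := normr_ge0 N.
move: e1K h1 h2; rewrite /K; nra.
Qed.

Lemma Cl_sub n (F G : 'rV[R]_n -> R) : Cl F -> Cl G -> Cl (fun x => F x - G x).
Proof.
move=> cF cG; have := Cl_add cF (Cl_mul (Cl_cst n (-1)) cG).
by rewrite (_ : (fun x => F x + -1 * G x) = fun x => F x - G x) //; apply: funext => x; ring.
Qed.

Lemma Cl_coord n (j : 'I_n) : Cl (fun x : 'rV[R]_n => x ord0 j).
Proof.
split; last by exists 1 => x hx; have /andP[h0 h1] := hx j; rewrite ger0_norm.
by move=> e e0; exists e => // x y _ _ h; exact: h.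
Qed.

Lemma Cl_sum n (I : Type) (s : seq I) (P : pred I) (Fs : I -> 'rV[R]_n -> R) :
  (forall i, Cl (Fs i)) -> Cl (fun x => \sum_(i <- s | P i) Fs i x).
Proof.
move=> h; elim: s => [|i s IH].
  by under [fun x => _]funext do rewrite big_nil; exact: Cl_cst.
under [fun x => _]funext do rewrite big_cons.
case: (P i) => //; exact: Cl_add.
Qed.

Lemma itv01 (t : R) : (`[(0:R), 1]%classic t) = (0 <= t <= 1).
Proof. by rewrite /= in_itv. Qed.

Lemma in_itv01 (t : R) : (t \in `[(0:R), 1]%classic) = (0 <= t <= 1).
Proof. by apply/idP/idP; rewrite inE /= in_itv. Qed.

Lemma cube_int_cst n c : cube_int (fun _ : 'rV[R]_n => c) = c.
Proof.
elim: n => [//|n IH] /=.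
rewrite (_ : (fun t => cube_int (fun _ => c)) = fun _ => c); last by apply: funext => t; exact: IH.
rewrite Rintegral_cst; last exact: measurable_itv.
have := lebesgue_measure_itv `[(0:R), 1]; rewrite /= lte_fin ltr01 /= => hm.
rewrite hm. 
by rewrite /= subr0 mulr1.
Qed.

Lemma cube_int_ext n (F G : 'rV[R]_n -> R) : (forall x, cube n x -> F x = G x) ->
  cube_int F = cube_int G.
Proof.
elim: n F G => [|n IH] F G h /=; first by apply: h => -[].
apply: eq_Rintegral => t; rewrite in_itv01 => ht.
apply: IH => x hx; apply: h; exact: cube_vcons.
Qed.

Definition Pack n := [/\
  (forall F G : 'rV[R]_n -> R, Cl F -> Cl G -> cube_int (fun x => F x + G x) = cube_int F + cube_int G),
  (forall c (F : 'rV[R]_n -> R), Cl F -> cube_int (fun x => c * F x) = c * cube_int F)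
  & (forall F G : 'rV[R]_n -> R, Cl F -> Cl G -> (forall x, cube n x -> F x <= G x) ->
       cube_int F <= cube_int G)].

Lemma Pack_sub n (P : Pack n) (F G : 'rV[R]_n -> R) : Cl F -> Cl G ->
  cube_int (fun x => F x - G x) = cube_int F - cube_int G.
Proof.
case: P => hD hZ _ cF cG.
have cG' : Cl (fun x => -1 * G x) by exact: Cl_mul (Cl_cst _ _) cG.
rewrite (_ : (fun x => F x - G x) = fun x => F x + (-1 * G x)); last first.
  by apply: funext => x; ring.
by rewrite hD // hZ //; ring.
Qed.

Lemma Pack_abs n (P : Pack n) (F : 'rV[R]_n -> R) M : Cl F ->
  (forall x, cube n x -> `|F x| <= M) -> `|cube_int F| <= M.
Proof.
case: P => _ _ hM cF h.
rewrite ler_norml; apply/andP; split.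
  rewrite -[X in X <= _](cube_int_cst n (- M)).
  apply: hM => //; first exact: Cl_cst.
  by move=> x hx; have := h x hx; rewrite ler_norml => /andP[].
rewrite -[X in _ <= X](cube_int_cst n M).
apply: hM => //; first exact: Cl_cst.
by move=> x hx; have := h x hx; rewrite ler_norml => /andP[].
Qed.

Lemma sec_UC1 n (P : Pack n) (F : 'rV[R]_n.+1 -> R) : Cl F ->
  UC1 (fun t => cube_int (fun x => F (vcons t x))).
Proof.
move=> cF e e0; have e20 : 0 < e / 2 by rewrite divr_gt0.
have [d d0 hd] := cF.1 _ e20; exists d => // t s ht hs hts.
rewrite -Pack_sub //; try exact: Cl_sec.
apply: (le_lt_trans (Pack_abs P (M := e / 2) _ _)).
- by apply: Cl_sub; exact: Cl_sec.
- move=> x hx; apply/ltW/hd; try exact: cube_vcons.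
  move=> i; case: (unliftP ord0 i) => [j ->|->]; first by rewrite !vconsS subrr normr0.
  by rewrite !vcons0.
- lra.
Qed.

Lemma pack n : Pack n.
Proof.
elim: n => [|n IH].
  by split => //= F G _ _ h; apply: h => -[].
split.
- move=> F G cF cG /=.
  rewrite -RintegralD; [|exact: measurable_itv|exact: UC1_int (sec_UC1 IH cF)|exact: UC1_int (sec_UC1 IH cG)].
  apply: eq_Rintegral => t; rewrite in_itv01 => ht.
  case: IH => hD _ _; apply: hD; exact: Cl_sec.
- move=> c F cF /=.
  rewrite -RintegralZl; [|exact: measurable_itv|exact: UC1_int (sec_UC1 IH cF)].
  apply: eq_Rintegral => t; rewrite in_itv01 => ht.
  case: IH => _ hZ _; apply: hZ; exact: Cl_sec.
- move=> F G cF cG h /=.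
  apply: le_Rintegral; [exact: measurable_itv|exact: UC1_int (sec_UC1 IH cF)|exact: UC1_int (sec_UC1 IH cG)|].
  move=> t; rewrite itv01 => ht.
  case: IH => _ _ hM; apply: hM; try exact: Cl_sec.
  move=> x hx; apply: h; exact: cube_vcons.
Qed.

Definition ctr (t : R) := t - 2^-1.

Lemma onem_int k : lebesgue_measure.-integrable `[(0:R), 1]%classic
   (EFin \o (fun y : R => unstable.onem y ^+ k)).
Proof.
apply: continuous_compact_integrable; first exact: segment_compact.
by apply: continuous_subspaceT => x; exact: continuous_onemXn.
Qed.

Lemma int_ctr : \int[lebesgue_measure]_(t in `[(0:R), 1]%classic) ctr t = 0.
Proof.
have -> : \int[lebesgue_measure]_(t in `[(0:R), 1]%classic) ctr t = \int[lebesgue_measure]_(t in `[(0:R), 1]%classic) (2^-1 * unstable.onem t ^+ 0 - unstable.onem t ^+ 1).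
  by apply: eq_Rintegral => t _; rewrite /ctr /unstable.onem expr0 expr1; field.
rewrite RintegralB; [|exact: measurable_itv| |exact: onem_int]; last first.
  apply: (eq_integrable _ _ _ _ (integrableZl _ (2^-1) (onem_int 0))) => //; exact: measurable_itv.
rewrite RintegralZl; [|exact: measurable_itv|exact: onem_int].
rewrite !Rintegral_onemXn; by field.
Qed.

Lemma int_ctr2 : \int[lebesgue_measure]_(t in `[(0:R), 1]%classic) (ctr t ^+ 2) = 12^-1.
Proof.
have -> : \int[lebesgue_measure]_(t in `[(0:R), 1]%classic) (ctr t ^+ 2) = \int[lebesgue_measure]_(t in `[(0:R), 1]%classic) ((unstable.onem t ^+ 2 - unstable.onem t ^+ 1) + 4^-1 * unstable.onem t ^+ 0).
  by apply: eq_Rintegral => t _; rewrite /ctr /unstable.onem expr0 expr1; field.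
have i4 : lebesgue_measure.-integrable `[(0:R), 1]%classic
   (EFin \o (fun y : R => 4^-1 * unstable.onem y ^+ 0)).
  apply: (eq_integrable _ _ _ _ (integrableZl _ (4^-1) (onem_int 0))) => //; exact: measurable_itv.
rewrite RintegralD; [|exact: measurable_itv| |exact: i4]; last first.
  apply: (eq_integrable _ _ _ _ (integrableB _ (onem_int 2) (onem_int 1))) => //; exact: measurable_itv.
rewrite RintegralB; [|exact: measurable_itv|exact: onem_int|exact: onem_int].
rewrite RintegralZl; [|exact: measurable_itv|exact: onem_int].
rewrite !Rintegral_onemXn; by field.
Qed.

Lemma Rint01_cst c : \int[lebesgue_measure]_(t in `[(0:R), 1]%classic) c = c.
Proof. exact: (cube_int_cst 1 c). Qed.

Lemma cube_coord (phi : R -> R) n (j : 'I_n) :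
  cube_int (fun x => phi (x ord0 j)) = \int[lebesgue_measure]_(t in `[(0:R), 1]%classic) phi t.
Proof.
elim: n j => [|n IH] j; first by case: j.
case: (unliftP ord0 j) => [j' ->|->] /=.
  transitivity (\int[lebesgue_measure]_(t in `[(0:R), 1]%classic)
       \int[lebesgue_measure]_(t in `[(0:R), 1]%classic) phi t); last by rewrite Rint01_cst.
  apply: eq_Rintegral => t _.
  rewrite -(IH j'); congr cube_int; apply: funext => x; by rewrite vconsS.
apply: eq_Rintegral => t _.
rewrite -[RHS](cube_int_cst n); congr cube_int; apply: funext => x; by rewrite vcons0.
Qed.

Lemma cube_prod0 (phi psi : R -> R) n (j k : 'I_n) :
  (forall m (k : 'I_m), Cl (fun x : 'rV[R]_m => psi (x ord0 k))) ->
  \int[lebesgue_measure]_(t in `[(0:R), 1]%classic) psi t = 0 ->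
  (j < k)%N -> cube_int (fun x => phi (x ord0 j) * psi (x ord0 k)) = 0.
Proof.
move=> hpsi hpsi0.
elim: n j k => [|n IH] j k; first by case: j.
case: (unliftP ord0 k) => [k' ->|->]; last by rewrite ltn0.
case: (unliftP ord0 j) => [j' ->|->] hjk /=.
  rewrite -[RHS](Rint01_cst 0); apply: eq_Rintegral => t _.
  rewrite -(IH j' k'); last by move: hjk; rewrite !lift0 ltnS.
  by congr cube_int; apply: funext => x; rewrite !vconsS.
rewrite -[RHS](Rint01_cst 0); apply: eq_Rintegral => t _.
have -> : (fun x : 'rV[R]_n => phi (vcons t x ord0 ord0) * psi (vcons t x ord0 (lift ord0 k')))
   = fun x => phi t * psi (x ord0 k') by apply: funext => x; rewrite vcons0 vconsS.
by case: (pack n) => _ hZ _; rewrite hZ // cube_coord hpsi0 mulr0.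
Qed.

Lemma Cl_ctr n (j : 'I_n) : Cl (fun x : 'rV[R]_n => ctr (x ord0 j)).
Proof. exact: Cl_sub (Cl_coord j) (Cl_cst _ _). Qed.

Lemma cube_ctr n (j : 'I_n) : cube_int (fun x => ctr (x ord0 j)) = 0.
Proof. by rewrite cube_coord int_ctr. Qed.

Lemma cube_ctr2 n (j : 'I_n) : cube_int (fun x => ctr (x ord0 j) * ctr (x ord0 j)) = 12^-1.
Proof. by rewrite (cube_coord (fun t => ctr t * ctr t)) -int_ctr2. Qed.

Lemma cube_ctrM n (j k : 'I_n) : j != k ->
  cube_int (fun x => ctr (x ord0 j) * ctr (x ord0 k)) = 0.
Proof.
move=> njk; have [jk|kj|e] := ltngtP j k.
- exact: cube_prod0 (fun m k => Cl_ctr k) int_ctr jk.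
- have -> : (fun x : 'rV[R]_n => ctr (x ord0 j) * ctr (x ord0 k)) = fun x => ctr (x ord0 k) * ctr (x ord0 j).
    by apply: funext => x; rewrite mulrC.
  exact: cube_prod0 (fun m k => Cl_ctr k) int_ctr kj.
- by move: njk; rewrite (val_inj e) eqxx.
Qed.

Lemma cont_Cl n (F : 'rV[R]_n -> R) : {within cube n, continuous F} -> Cl F.
Proof.
move=> hF; split; first exact: HC.
have := compact_bounded (continuous_compact hF (@cube_compact n)).
move=> hb; have [M0 [_ hM0]] := hb.
exists (M0 + 1) => x hx; apply: (hM0 (M0 + 1)); [by rewrite ltrDl|by exists x].
Qed.

Lemma cube_int_sum n (I : Type) (s : seq I) (P : pred I) (Fs : I -> 'rV[R]_n -> R) :
  (forall i, Cl (Fs i)) ->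
  cube_int (fun x => \sum_(i <- s | P i) Fs i x) = \sum_(i <- s | P i) cube_int (Fs i).
Proof.
move=> h; elim: s => [|i s IH].
  rewrite big_nil -[RHS](cube_int_cst n 0); congr cube_int; apply: funext => x; by rewrite big_nil.
rewrite big_cons -IH.
have -> : (fun x => \sum_(j <- i :: s | P j) Fs j x) =
   (fun x => if P i then Fs i x + \sum_(j <- s | P j) Fs j x else \sum_(j <- s | P j) Fs j x).
  by apply: funext => x; rewrite big_cons.
case: (P i) => //; case: (pack n) => hD _ _; rewrite hD //; exact: Cl_sum.
Qed.

Lemma ctr_le1 t : 0 <= t <= 1 -> `|ctr t| <= 1.
Proof. move=> /andP[h0 h1]; rewrite /ctr ler_norml; apply/andP; split; lra. Qed.

Lemma UC1_cst c : UC1 (fun _ => c).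
Proof. by move=> e e0; exists 1 => // *; rewrite subrr normr0. Qed.

Lemma Lindep n (F G : 'rV[R]_n -> R) (M : R) (k : nat) (j : 'I_n) : Cl F -> (k <= j)%N ->
  (forall x y : 'rV[R]_n, (forall i : 'I_n, (i < k)%N -> x ord0 i = y ord0 i) -> G x = G y) ->
  (forall x, cube n x -> `|F x - G x| <= M) ->
  `|cube_int (fun x => ctr (x ord0 j) * F x)| <= M.
Proof.
elim: n F G k j => [|n IH] F G k j cF hkj hG hM; first by move: j hkj => -[].
move: hkj; case: (unliftP ord0 j) => [j' ej|ej] hkj.
  subst j.
  have hg : forall t, 0 <= t <= 1 ->
     `|cube_int (fun x => ctr (vcons t x ord0 (lift ord0 j')) * F (vcons t x))| <= M.
    move=> t ht.
    have -> : (fun x => ctr (vcons t x ord0 (lift ord0 j')) * F (vcons t x)) =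
        (fun x => ctr (x ord0 j') * F (vcons t x)) by apply: funext => x; rewrite vconsS.
    apply: (IH (fun x => F (vcons t x)) (fun x => G (vcons t x)) k.-1 j').
    - exact: Cl_sec.
    - by move: hkj; rewrite lift0; lia.
    - move=> x y hxy; apply: hG => i hi; case: (unliftP ord0 i) => [i' ei|ei]; subst i.
        by rewrite !vconsS; apply: hxy; move: hi; rewrite lift0; lia.
      by rewrite !vcons0.
    - by move=> x hx; apply: hM; exact: cube_vcons.
  have gi := UC1_int (sec_UC1 (pack n) (Cl_mul (Cl_ctr (lift ord0 j')) cF)).
  rewrite /= ler_norml; apply/andP; split.
    rewrite -[X in X <= _](Rint01_cst (- M)).
    apply: le_Rintegral; [exact: measurable_itv|exact: UC1_int (UC1_cst _)|exact: gi|].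
    by move=> t; rewrite itv01 => ht; have := hg t ht; rewrite ler_norml => /andP[].
  rewrite -[X in _ <= X](Rint01_cst M).
  apply: le_Rintegral; [exact: measurable_itv|exact: gi|exact: UC1_int (UC1_cst _)|].
  by move=> t; rewrite itv01 => ht; have := hg t ht; rewrite ler_norml => /andP[].
subst j; have k0 : k = 0%N by apply/eqP; rewrite -leqn0; exact: hkj.
subst k.
set c := G 0.
have hc : forall x, G x = c by move=> x; apply: hG => i; rewrite ltn0.
have -> : (fun x : 'rV[R]_n.+1 => ctr (x ord0 ord0) * F x) =
   (fun x => ctr (x ord0 ord0) * (F x - c) + c * ctr (x ord0 ord0)).
  by apply: funext => x; ring.
have cc := Cl_ctr (@ord0 n).
case: (pack n.+1) => hD hZ _.
rewrite hD; first last.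
- exact: Cl_mul (Cl_cst _ _) cc.
- exact: Cl_mul cc (Cl_sub cF (Cl_cst _ _)).
rewrite hZ // cube_ctr mulr0 addr0.
apply: Pack_abs; first exact: pack.
  exact: Cl_mul cc (Cl_sub cF (Cl_cst _ _)).
move=> x hx; rewrite normrM -(hc x).
apply: le_trans (hM x hx); apply: ler_piMl => //; exact: ctr_le1.
Qed.

Ltac clt := repeat first [ exact: Cl_cst | exact: Cl_coord | exact: Cl_ctr | assumption
  | apply: Cl_add | apply: Cl_mul | apply: Cl_sub ].

Definition sj p (f : 'rV[R]_p -> R) (j : 'I_p) := cube_int (fun x => ctr (x ord0 j) * f x).

Lemma LS_formula p (f : 'rV[R]_p -> R) (A : {set 'I_p}) c0 (c : 'rV[R]_p) : Cl f ->
  LS_obj f A c0 c = cube_int (fun x => f x * f x)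
     - 2 * (c0 + \sum_(j in A) c ord0 j / 2) * cube_int f
     - 2 * \sum_(j in A) c ord0 j * sj f j
     + (c0 + \sum_(j in A) c ord0 j / 2) ^+ 2
     + \sum_(j in A) c ord0 j ^+ 2 / 12.
Proof.
move=> cf.
set e := c0 + \sum_(j in A) c ord0 j / 2.
set L := fun x : 'rV[R]_p => \sum_(j in A) c ord0 j * ctr (x ord0 j).
have hL : forall x : 'rV[R]_p, \sum_(j in A) c ord0 j * x ord0 j = L x + \sum_(j in A) c ord0 j / 2.
  move=> x; rewrite /L -big_split /=; apply: eq_bigr => j _; rewrite /ctr; by field.
have cL : Cl L by apply: Cl_sum => i; clt.
case: (pack p) => hD hZ _.
rewrite /LS_obj.
have -> : (fun x => (f x - c0 - \sum_(j in A) c ord0 j * x ord0 j) ^+ 2) =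
  fun x => f x * f x + (-2 * e) * f x + (-2) * (f x * L x) + (fun _ => e ^+ 2) x
     + (2 * e) * L x + L x * L x.
  by apply: funext => x; rewrite hL /e; ring.
rewrite !hD; try by clt.
rewrite !hZ; try by clt.
rewrite cube_int_cst.
have L0 : cube_int L = 0.
  rewrite /L cube_int_sum; last by move=> j; clt.
  by apply: big1 => j _; rewrite hZ ?cube_ctr ?mulr0 //; clt.
have fL : cube_int (fun x => f x * L x) = \sum_(j in A) c ord0 j * sj f j.
  have -> : (fun x => f x * L x) = fun x => \sum_(j in A) c ord0 j * (ctr (x ord0 j) * f x).
    by apply: funext => x; rewrite /L mulr_sumr; apply: eq_bigr => j _; ring.
  rewrite cube_int_sum; last by move=> j; clt.
  by apply: eq_bigr => j _; rewrite hZ //; clt.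
have LL : cube_int (fun x => L x * L x) = \sum_(j in A) c ord0 j ^+ 2 / 12.
  have -> : (fun x => L x * L x) = fun x => \sum_(j in A) \sum_(k in A)
       (c ord0 j * c ord0 k) * (ctr (x ord0 j) * ctr (x ord0 k)).
    apply: funext => x; rewrite /L mulr_suml; apply: eq_bigr => j _.
    rewrite mulr_sumr; apply: eq_bigr => k _; ring.
  rewrite cube_int_sum; last by move=> j; apply: Cl_sum => k; clt.
  apply: eq_bigr => j jA.
  rewrite cube_int_sum; last by move=> k; clt.
  rewrite (bigD1 j) //= big1; last first.
    by move=> k /andP[_ kj]; rewrite hZ; [rewrite cube_ctrM ?mulr0 // eq_sym | clt].
  rewrite hZ; last by clt.
  by rewrite cube_ctr2 addr0; field.
rewrite L0 fL LL; ring.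
Qed.

Lemma proj_cube p0 p (h : (p0 <= p)%N) (x : 'rV[R]_p) : cube p x -> cube p0 (proj_first h x).
Proof. by move=> hx i; rewrite mxE; exact: hx. Qed.

End S.

Ltac clt := repeat first [ exact: Cl_cst | exact: Cl_coord | exact: Cl_ctr | assumption
  | apply: Cl_add | apply: Cl_mul | apply: Cl_sub ].

Unset Implicit Arguments.

Theorem lemma6 (R : realType) (p p0 : nat) (hp0 : (0 < p0)%N) (hp : (p0 < p)%N)
  (f : 'rV[R]_p -> R) (ft : 'rV[R]_p0 -> R) (eta tau : R)
  (hf : {within cube p, continuous f})
  (hft : {within cube p0, continuous ft})
  (heta : 0 < eta)
  (hsup : sup [set `|f x - ft (proj_first (ltnW hp) x)| | x in cube p] < eta)
  (htau : 0 < tau)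
  (hsig : forall j : 'I_p, (j < p0)%N ->
     tau < `|cube_int (fun x : 'rV[R]_p => x ord0 j * f x) - cube_int f / 2|) :
  forall A : {set 'I_p},
    (exists b0 b, is_LS_min f A b0 b) /\
    forall (b0 : R) (b : 'rV[R]_p), is_LS_min f A b0 b ->
      [/\ forall j, j \in A ->
            b ord0 j = 12 * (cube_int (fun x : 'rV[R]_p => x ord0 j * f x) - cube_int f / 2),
          b0 = cube_int f - \sum_(j in A) b ord0 j / 2,
          forall j, j \in A -> (j < p0)%N -> 12 * tau < `|b ord0 j|
        & forall j, j \in A -> (p0 <= j)%N -> `|b ord0 j| < 12 * eta].
Proof.
move=> A.
have cf : Cl f := cont_Cl hf.
have [hD hZ hM] := pack R p.
set m := cube_int f.
have hs : forall j, cube_int (fun x => x ord0 j * f x) - m / 2 = sj f j.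
  move=> j; rewrite /sj.
  have -> : (fun x : 'rV[R]_p => ctr (x ord0 j) * f x) =
      fun x => x ord0 j * f x + (- 2^-1) * f x by apply: funext => x; rewrite /ctr; ring.
  rewrite hD; [|clt|clt]; rewrite hZ //; rewrite /m; ring.
set Q := cube_int (fun x => f x * f x).
set K := Q - m ^+ 2 - 12 * \sum_(j in A) sj f j ^+ 2.
have key : forall c0 (c : 'rV[R]_p), LS_obj f A c0 c = K + (c0 + \sum_(j in A) c ord0 j / 2 - m) ^+ 2
     + \sum_(j in A) (c ord0 j - 12 * sj f j) ^+ 2 / 12.
  move=> c0 c; rewrite LS_formula // -/m -/Q.
  have E : \sum_(j in A) (c ord0 j - 12 * sj f j) ^+ 2 / 12 = \sum_(j in A) c ord0 j ^+ 2 / 12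
      - 2 * \sum_(j in A) c ord0 j * sj f j + 12 * \sum_(j in A) sj f j ^+ 2.
    rewrite !mulr_sumr -sumrB -big_split /=; apply: eq_bigr => j _; by field.
  rewrite E /K; ring.
have sq0 : forall (c : 'rV[R]_p), 0 <= \sum_(j in A) (c ord0 j - 12 * sj f j) ^+ 2 / 12.
  by move=> c; apply: sumr_ge0 => j _; rewrite divr_ge0 // sqr_ge0.
pose b := \row_(j < p) (if j \in A then 12 * sj f j else 0).
pose b0 := m - \sum_(j in A) b ord0 j / 2.
have bA : forall j, j \in A -> b ord0 j = 12 * sj f j by move=> j jA; rewrite mxE jA.
have bsupp : supported_on A b by move=> j jA; rewrite mxE (negbTE jA).
have LSb : LS_obj f A b0 b = K.
  rewrite key (_ : \sum_(j in A) (b ord0 j - 12 * sj f j) ^+ 2 / 12 = 0); last first.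
    by apply: big1 => j jA; rewrite bA // subrr expr0n /= mul0r.
  rewrite /b0; ring.
split.
  exists b0, b; split => // c0 c _.
  rewrite LSb key -addrA lerDl addr_ge0 // sqr_ge0 //.
move=> b0' b' [supp hmin].
have := hmin b0 b bsupp; rewrite LSb key.
have h1 := sqr_ge0 (b0' + \sum_(j in A) b' ord0 j / 2 - m).
have h2 := sq0 b'.
move=> hle.
have E1 : (b0' + \sum_(j in A) b' ord0 j / 2 - m) ^+ 2 = 0 by lra.
have E2 : \sum_(j in A) (b' ord0 j - 12 * sj f j) ^+ 2 / 12 = 0 by lra.
have hj : forall j, j \in A -> b' ord0 j = 12 * sj f j.
  move=> j jA; move: E2; rewrite (bigD1 j) //=.
  have r0 : 0 <= \sum_(i in A | i != j) (b' ord0 i - 12 * sj f i) ^+ 2 / 12.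
    by apply: sumr_ge0 => i _; rewrite divr_ge0 // sqr_ge0.
  have t0 := sqr_ge0 (b' ord0 j - 12 * sj f j).
  move=> h; have : (b' ord0 j - 12 * sj f j) ^+ 2 = 0 by lra.
  by move/eqP; rewrite sqrf_eq0 subr_eq0 => /eqP.
split.
- by move=> j jA; rewrite hj // hs.
- by move/eqP: E1; rewrite sqrf_eq0 => /eqP h; rewrite -/m; lra.
- move=> j jA jp0; rewrite hj // normrM (ger0_norm (_ : 0 <= 12 :> R)) //.
  rewrite ltr_pM2l //; have := hsig j jp0; by rewrite -/m hs.
- move=> j jA jp0; rewrite hj // normrM (ger0_norm (_ : 0 <= 12 :> R)) //.
  set S := sup _ in hsup.
  have hS : forall x, cube p x -> `|f x - ft (proj_first (ltnW hp) x)| <= S.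
    move=> x hx; apply: sup_upper_bound; last by exists x.
    split.
      exists (`|f 0 - ft (proj_first (ltnW hp) 0)|); exists 0 => //.
      by move=> i; rewrite mxE lexx ler01.
    have [Mf hMf] := cf.2; have [Mt hMt] := (cont_Cl hft).2.
    exists (Mf + Mt) => y [x' hx' <-].
    apply: (le_trans (ler_normB _ _)); apply: lerD; first exact: hMf.
    by apply: hMt; exact: proj_cube.
  have hb : `|sj f j| <= S.
    apply: (Lindep (G := fun x => ft (proj_first (ltnW hp) x)) (k := p0) cf jp0) => //.
    move=> x y hxy; congr ft; apply/rowP => i; rewrite !mxE; apply: hxy; exact: ltn_ord i.
  by rewrite ltr_pM2l //; exact: le_lt_trans hb hsup.
Qed.
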